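(* Let $G$ and $H$ be finite simple graphs, let $k\ge 0$ be an integer, and let $\delta_H$ be the minimum degree of $H$. If $S_G$ is a global defensive $k$-alliance in $G$, then $S_G\times V_H$ is a global defensive $(k\,n(H)+\delta_H)$-alliance in the lexicographic product $G[H]$. Consequently, $$\gamma^d_{k n(H)+\delta_H}(G[H])\le n(H)\,\gamma^d_k(G).$$
   Context: All graphs are finite and simple; $n(H)=|V_H|$. For $S\subseteq V_G$ and $v\in V_G$, $N_S(v)=\{u\in S: uv\in E_G\}$ and $\bar S=V_G\setminus S$. For an integer $k$, a nonempty $S\subseteq V_G$ is a global defensive $k$-alliance in $G$ if every vertex outside $S$ has a neighbor in $S$ and $|N_S(v)|\ge |N_{\bar S}(v)|+k$ for every $v\in S$; $\gamma^d_k(G)$ is the minimum size of such a set ($\infty$ if none exists). The lexicographic product $G[H]$ has vertex set $V_G\times V_H$, with $(g_1,h_1)\sim(g_2,h_2)$ iff $g_1g_2\in E_G$, or $g_1=g_2$ and $h_1h_2\in E_H$. *)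

(* Defs.v *)
From mathcomp Require Import all_boot.
Set Implicit Arguments. Unset Strict Implicit. Unset Printing Implicit Defensive.

(* A finite simple graph: vertex set a finType T, edge relation e : rel T
   that is symmetric and irreflexive (stated as hypotheses where used). *)

Definition nbh_in (T : finType) (e : rel T) (S : {set T}) (v : T) : {set T} :=
  [set u in S | e v u].

Definition is_gda (T : finType) (e : rel T) (k : nat) (S : {set T}) : bool :=
  [&& S != set0,
      [forall v, (v \notin S) ==> [exists u in S, e v u]] &
      [forall v in S, #|nbh_in e (~: S) v| + k <= #|nbh_in e S v| ]].

(* gamma^d_k(G) : None encodes infinity (no such alliance exists). *)
Definition gda_number (T : finType) (e : rel T) (k : nat) : option nat :=
  let A := [set S : {set T} | is_gda e k S] in
  if A == set0 then None else Some (\big[minn/#|T|]_(S in A) #|S|).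

Definition le_inf (a b : option nat) : bool :=
  match a, b with
  | _, None => true
  | None, Some _ => false
  | Some x, Some y => x <= y
  end.

Definition mul_inf (n : nat) (a : option nat) : option nat := omap (muln n) a.

Definition deg (T : finType) (e : rel T) (v : T) : nat := #|[set u | e v u]|.
Definition min_deg (T : finType) (e : rel T) : nat :=
  \big[minn/#|T|]_(v : T) deg e v.

Definition lexprod (TG TH : finType) (eG : rel TG) (eH : rel TH) : rel (TG * TH) :=
  fun x y => eG x.1 y.1 || ((x.1 == y.1) && eH x.2 y.2).

(* Main.v *)
Require Import Defs.
From mathcomp Require Import all_boot.

Lemma bigmin_le (T:finType) (F:T->nat) (d:nat) (P : pred T) (x:T) : P x -> \big[minn/d]_(v | P v) F v <= F x.
Proof.
move=> Px; have: x \in index_enum T by rewrite mem_index_enum.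
elim: (index_enum T) => //= a r IH; rewrite in_cons big_cons.
case/orP=> [/eqP<-|xr]; first by rewrite Px geq_minl.
case: (P a); last exact: IH.
by apply: leq_trans (geq_minr _ _) (IH xr).
Qed.

Lemma bigmin_le_in (T:finType) (F:T->nat) (d:nat) (A : {set T}) (x:T) : x \in A -> \big[minn/d]_(v in A) F v <= F x.
Proof. exact: bigmin_le. Qed.

Lemma part1 (TG TH : finType) (eG : rel TG) (eH : rel TH)
  (irrG : irreflexive eG) (k : nat) (SG : {set TG}) :
  0 < #|TH| -> is_gda eG k SG ->
     is_gda (lexprod eG eH) (k * #|TH| + min_deg eH) (setX SG [set: TH]).
Proof.
move=> neH /and3P[ne dom all].
apply/and3P; split.
- case/set0Pn: ne => g gS.
  have [h _] : exists h : TH, true.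
    by case/card_gt0P: neH => h _; exists h.
  by apply/set0Pn; exists (g, h); rewrite in_setX gS in_setT.
- apply/forallP => -[g h]; rewrite in_setX in_setT andbT; apply/implyP => gS.
  have /existsP [u /andP [uS eu]] := implyP (forallP dom g) gS.
  by apply/existsP; exists (u, h); rewrite in_setX uS in_setT /lexprod /= eu.
- apply/forall_inP => -[g h]; rewrite in_setX in_setT andbT => gS.
  have Hk := forall_inP all g gS.
  set n := #|TH|.
  have E1 : nbh_in (lexprod eG eH) (~: setX SG [set: TH]) (g, h)
            \subset setX (nbh_in eG (~: SG) g) [set: TH].
    apply/subsetP => -[g' h']; rewrite !inE /lexprod /= andbT.
    case/andP => ng' /orP [eg'|/andP [/eqP eg _]]; first by rewrite ng' eg'.
    by move: ng'; rewrite -eg gS.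
  set B := [set (g, h') | h' in [set u | eH h u]].
  have E2 : setX (nbh_in eG SG g) [set: TH] :|: B
            \subset nbh_in (lexprod eG eH) (setX SG [set: TH]) (g, h).
    apply/subsetP => -[g' h']; rewrite !inE /lexprod /=.
    case/orP => [/andP [/andP [g1 g2] _]|/imsetP [h'' ]]; first by rewrite g1 g2.
    by rewrite inE => eh [-> ->]; rewrite gS eqxx eh orbT.
  have D : setX (nbh_in eG SG g) [set: TH] :&: B = set0.
    apply/setP => -[g' h']; rewrite !inE.
    apply/negbTE/negP => /andP [H1 /imsetP [h'' _ [eq1 _]]].
    by move: H1; rewrite eq1 irrG !andbF.
  have cB : #|B| = deg eH h.
    by rewrite card_imset // => a b [].
  have md : min_deg eH <= deg eH h by apply: bigmin_le.
  apply: leq_trans (subset_leq_card E2).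
  rewrite cardsU D cards0 subn0 cB !cardsX cardsT -/n.
  have c1 := subset_leq_card E1; rewrite cardsX cardsT -/n in c1.
  apply: leq_trans (leq_add c1 (leqnn _)) _.
  rewrite addnA -mulnDl.
  apply: leq_add; last exact: md.
  by rewrite leq_mul2r Hk orbT.
Qed.

Theorem mainTheorem3 (TG TH : finType) (eG : rel TG) (eH : rel TH)
  (symG : symmetric eG) (irrG : irreflexive eG)
  (symH : symmetric eH) (irrH : irreflexive eH)
  (neH : 0 < #|TH|) (k : nat) :
  (forall SG : {set TG}, is_gda eG k SG ->
     is_gda (lexprod eG eH) (k * #|TH| + min_deg eH) (setX SG [set: TH]))
  /\ le_inf (gda_number (lexprod eG eH) (k * #|TH| + min_deg eH))
            (mul_inf #|TH| (gda_number eG k)).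
Proof.
split; first by move=> SG; apply: part1.
rewrite /gda_number /=.
case EG: ([set S | is_gda eG k S] == set0) => /=; first by case: (if _ then _ else _).
move/negbT: EG => /set0Pn [S0 S0A].
case: (arg_minnP (fun S : {set TG} => #|S|) S0A) => S1 S1A S1min.
have H1 := @part1 TG TH eG eH irrG k S1 neH.
have S1g : S1 \in [set S | is_gda eG k S] by exact: S1A.
rewrite inE in S1g.
have H1A : setX S1 [set: TH] \in [set S : {set TG * TH} | is_gda (lexprod eG eH) (k * #|TH| + min_deg eH) S].
  by rewrite inE; apply: H1.
case: ifP => [/eqP E|_]; first by move: H1A; rewrite E inE.
rewrite /le_inf.
have B1 := @bigmin_le_in _ (fun S : {set prod TG TH} => #|S|) _ _ _ H1A.
apply: leq_trans (B1 _) _.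
rewrite cardsX cardsT mulnC leq_mul2l.
apply/orP; right.
apply: (big_ind (fun x => #|S1| <= x)).
- exact: max_card.
- by move=> x y a b; rewrite leq_min a b.
- by move=> S SA; apply: S1min.
Qed.
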